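(* Let $\lambda>0$ and let $\mathbf r_\lambda=(\mathbf r_{1\lambda},\dots,\mathbf r_{N\lambda})\in\mathfrak R$ be any point at which $f+\lambda g$ attains its minimum over $\mathfrak R$. Write $\mathbf r_{i\lambda}=(x_{i\lambda},y_{i\lambda})=|\mathbf r_{i\lambda}|(\cos\varphi_{i\lambda},\sin\varphi_{i\lambda})$, put $\omega=\sqrt{2\lambda}$, and define for $t\ge 0$ $$\mathbf r_{i\lambda}(t)=|\mathbf r_{i\lambda}|\big(\cos(\varphi_{i\lambda}+\omega t),\ \sin(\varphi_{i\lambda}+\omega t)\big),\qquad i=1,\dots,N .$$ Then $\mathbf r_\lambda(t)=(\mathbf r_{1\lambda}(t),\dots,\mathbf r_{N\lambda}(t))$, $t\ge0$, is a solution of the equations of motion $m_i\ddot{\mathbf r}_i=\mathbf F_i(\mathbf r)$, $i=1,\dots,N$, with initial conditions $\mathbf r_i(0)=\mathbf r_{i\lambda}$, $\dot{\mathbf r}_i(0)=(-\omega y_{i\lambda},\ \omega x_{i\lambda})$, $i=1,\dots,N$.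
   Context: Fix $N\ge 2$, masses $m_1,\dots,m_N>0$ and a constant $\gamma>0$. The planar configuration space is $\mathfrak R=\{\mathbf r=(\mathbf r_1,\dots,\mathbf r_N)\in(\mathbb R^2)^N:\ \mathbf r_i\neq\mathbf r_j \text{ for } i\neq j\}$. Define $f(\mathbf r)=\sum_{i<j}\frac{\gamma m_im_j}{|\mathbf r_j-\mathbf r_i|}$ and $g(\mathbf r)=\sum_i m_i|\mathbf r_i|^2$ on $\mathfrak R$. The force on particle $i$ is $\mathbf F_i(\mathbf r)=\sum_{j\ne i}\frac{\gamma m_im_j(\mathbf r_j-\mathbf r_i)}{|\mathbf r_j-\mathbf r_i|^3}$. For every $\lambda>0$ the function $f+\lambda g$ attains its minimum on $\mathfrak R$. *)

(* Defs.v *)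
From Stdlib Require Import Reals Lra Arith.
From Coquelicot Require Import Coquelicot.
Open Scope R_scope.

(* Particles are indexed by 0, ..., N-1. A planar configuration is given by
   its coordinate functions xs ys : nat -> R (particle i is at (xs i, ys i));
   only the values at indices i < N matter. *)

Fixpoint fsum (n : nat) (a : nat -> R) : R :=
  match n with
  | O => 0
  | S k => fsum k a + a k
  end.

Definition dist2 (xs ys : nat -> R) (i j : nat) : R :=
  sqrt ((xs j - xs i) ^ 2 + (ys j - ys i) ^ 2).

Definition in_config (N : nat) (xs ys : nat -> R) : Prop :=
  forall i j, (i < N)%nat -> (j < N)%nat -> i <> j ->
    (xs i, ys i) <> (xs j, ys j).

Definition fpot (N : nat) (m : nat -> R) (gamma : R) (xs ys : nat -> R) : R :=
  fsum N (fun i => fsum N (fun j =>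
    if Nat.ltb i j then gamma * m i * m j / dist2 xs ys i j else 0)).

Definition gmom (N : nat) (m : nat -> R) (xs ys : nat -> R) : R :=
  fsum N (fun i => m i * (xs i ^ 2 + ys i ^ 2)).

Definition Fx (N : nat) (m : nat -> R) (gamma : R) (xs ys : nat -> R) (i : nat) : R :=
  fsum N (fun j => if Nat.eqb j i then 0
    else gamma * m i * m j * (xs j - xs i) / dist2 xs ys i j ^ 3).

Definition Fy (N : nat) (m : nat -> R) (gamma : R) (xs ys : nat -> R) (i : nat) : R :=
  fsum N (fun j => if Nat.eqb j i then 0
    else gamma * m i * m j * (ys j - ys i) / dist2 xs ys i j ^ 3).

Definition is_minimizer (N : nat) (m : nat -> R) (gamma lambda : R)
    (xs ys : nat -> R) : Prop :=
  in_config N xs ys /\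
  forall xs' ys', in_config N xs' ys' ->
    fpot N m gamma xs ys + lambda * gmom N m xs ys
      <= fpot N m gamma xs' ys' + lambda * gmom N m xs' ys'.

(* Main.v *)
Require Import Defs.
From Stdlib Require Import Reals Lra Lia Arith FunctionalExtensionality.
From Coquelicot Require Import Coquelicot.
Open Scope R_scope.

Lemma fsum_ext n a b : (forall k, (k < n)%nat -> a k = b k) -> fsum n a = fsum n b.
Proof. induction n; simpl; intros H; auto. rewrite IHn by (intros; apply H; lia). rewrite H by lia. auto. Qed.

Lemma fsum_plus n a b : fsum n (fun k => a k + b k) = fsum n a + fsum n b.
Proof. induction n; simpl; [lra|]. rewrite IHn; lra. Qed.

Lemma fsum_scal n c a : fsum n (fun k => c * a k) = c * fsum n a.
Proof. induction n; simpl; [lra|]. rewrite IHn; lra. Qed.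

Lemma fsum_zero n : fsum n (fun _ => 0) = 0.
Proof. induction n; simpl; [lra|]. rewrite IHn; lra. Qed.

Lemma fsum_single n i c : (i < n)%nat -> fsum n (fun k => if Nat.eqb k i then c else 0) = c.
Proof.
  induction n; simpl; intros H; [lia|].
  destruct (Nat.eqb_spec n i).
  - subst. rewrite (fsum_ext _ _ (fun _ => 0)). rewrite fsum_zero; lra.
    intros k Hk. destruct (Nat.eqb_spec k i); [lia|auto].
  - rewrite IHn by lia. lra.
Qed.

Lemma is_derive_fsum n (a : nat -> R -> R) d x :
  (forall k, (k < n)%nat -> is_derive (a k) x (d k)) ->
  is_derive (fun s => fsum n (fun k => a k s)) x (fsum n d).
Proof.
  induction n; simpl; intros H.
  - exact (@is_derive_const R_AbsRing R_NormedModule 0 x).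
  - exact (@is_derive_plus R_AbsRing R_NormedModule (fun s => fsum n (fun k => a k s)) (a n) x _ _ (IHn ltac:(intros; apply H; lia)) (H n ltac:(lia))).
Qed.

Lemma min_delta n (P : nat -> Prop) (d : nat -> R) :
  (forall b, (b < n)%nat -> P b -> 0 < d b) ->
  exists e, 0 < e /\ forall b, (b < n)%nat -> P b -> e <= d b.
Proof.
  induction n; intros H.
  - exists 1; split; [lra|]; intros; lia.
  - destruct IHn as [e [He Hb]]. intros; apply H; auto; lia.
    destruct (Classical_Prop.classic (P n)) as [Pn|Pn].
    + exists (Rmin e (d n)). split. { apply Rmin_pos; auto. }
      intros b Hb' Pb. destruct (Nat.eq_dec b n). subst; apply Rmin_r.
      eapply Rle_trans. apply Rmin_l. apply Hb; auto; lia.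
    + exists e; split; auto. intros b Hb' Pb. destruct (Nat.eq_dec b n). subst; tauto.
      apply Hb; auto; lia.
Qed.

Lemma local_min_deriv h l e : 0 < e -> is_derive h 0 l ->
  (forall s, Rabs s < e -> h 0 <= h s) -> l = 0.
Proof.
  intros He Hd Hm. apply is_derive_Reals in Hd.
  set (pr := exist _ l Hd : derivable_pt h 0).
  rewrite <- (derive_pt_eq_0 h 0 l pr Hd).
  apply (deriv_minimum h (-e) e 0 pr); try lra.
  intros x H1 H2. apply Hm. apply Rabs_def1; lra.
Qed.

Lemma deriv_inv_sqrt c p q u v : 0 < p^2 + q^2 ->
  is_derive (fun s => c / sqrt ((p + s*u)^2 + (q + s*v)^2)) 0
    (- c * (u*p + v*q) / sqrt (p^2+q^2) ^ 3).
Proof.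
  intros Hpos.
  auto_derive.
  - replace ((p + 0*u)*((p+0*u)*1) + (q+0*v)*((q+0*v)*1)) with (p^2+q^2) by ring.
    split; auto. split; auto. apply Rgt_not_eq, sqrt_lt_R0. auto.
  - replace ((p + 0*u)*((p+0*u)*1) + (q+0*v)*((q+0*v)*1)) with (p^2+q^2) by ring.
    assert (0 < sqrt (p^2+q^2)) by (apply sqrt_lt_R0; auto).
    field. lra.
Qed.

Ltac toR := match goal with |- @eq _ ?a ?b => change (@eq R a b) end.

Ltac fixsq := repeat match goal with |- context [?a * (?a * 1)] => replace (a * (a*1)) with (a^2) by ring end.

Lemma is_derive_eq (f : R -> R) x l l' : is_derive f x l -> l = l' -> is_derive f x l'.
Proof. intros H ->; auto. Qed.

Lemma config_pos N xs ys i j : in_config N xs ys -> (i < N)%nat -> (j < N)%nat -> i <> j ->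
  0 < (xs j - xs i)^2 + (ys j - ys i)^2.
Proof.
  intros Hc Hi Hj Hij.
  destruct (Rlt_or_le 0 ((xs j - xs i)^2 + (ys j - ys i)^2)) as [H|H]; auto.
  exfalso. apply (Hc i j Hi Hj Hij).
  pose proof (pow2_ge_0 (xs j - xs i)). pose proof (pow2_ge_0 (ys j - ys i)).
  assert ((xs j - xs i)^2 = 0) by lra. assert ((ys j - ys i)^2 = 0) by lra.
  assert (xs j - xs i = 0) by (apply Rsqr_0_uniq; unfold Rsqr; simpl in H2; lra). assert (ys j - ys i = 0) by (apply Rsqr_0_uniq; unfold Rsqr; simpl in H3; lra).
  f_equal; lra.
Qed.

Definition pert (xs : nat -> R) i u s := fun j => if Nat.eqb j i then xs j + s * u else xs j.

Definition Gf m gamma xs ys i u v j :=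
  gamma * m i * m j * (u * (xs j - xs i) + v * (ys j - ys i)) / dist2 xs ys i j ^ 3.

Definition Dterm m gamma xs ys i u v a b :=
  if Nat.ltb a b then
    (if Nat.eqb a i then Gf m gamma xs ys i u v b else 0) +
    (if Nat.eqb b i then Gf m gamma xs ys i u v a else 0)
  else 0.

Lemma term_deriv N m gamma xs ys i u v a b :
  in_config N xs ys -> (a < N)%nat -> (b < N)%nat ->
  is_derive (fun s => if Nat.ltb a b then
      gamma * m a * m b / dist2 (pert xs i u s) (pert ys i v s) a b else 0) 0
    (Dterm m gamma xs ys i u v a b).
Proof.
  intros Hc Ha Hb. unfold Dterm.
  destruct (Nat.ltb_spec a b).
  2: { exact (@is_derive_const R_AbsRing R_NormedModule 0 0). }
  destruct (Nat.eqb_spec a i) as [Hai|Hai].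
  - subst a. destruct (Nat.eqb_spec b i) as [Hbi|Hbi]; [lia|].
    pose proof (config_pos N xs ys i b Hc Ha Hb ltac:(lia)) as Hp.
    eapply is_derive_eq.
    + eapply is_derive_ext; [|apply (deriv_inv_sqrt (gamma * m i * m b) (xs b - xs i) (ys b - ys i) (-u) (-v) Hp)].
      intro t. simpl. unfold dist2, pert. rewrite Nat.eqb_refl.
      rewrite (proj2 (Nat.eqb_neq b i) Hbi). do 3 f_equal; ring.
    + unfold Gf, dist2. rewrite Rplus_0_r. toR. field. apply Rgt_not_eq, sqrt_lt_R0; auto.
  - destruct (Nat.eqb_spec b i) as [Hbi|Hbi].
    + subst b.
      pose proof (config_pos N xs ys a i Hc Ha Hb ltac:(lia)) as Hp.
      replace ((xs i - xs a) ^ 2 + (ys i - ys a) ^ 2) with ((xs a - xs i) ^ 2 + (ys a - ys i) ^ 2) in Hp by ring.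
      eapply is_derive_eq.
      * eapply is_derive_ext; [|apply (deriv_inv_sqrt (gamma * m a * m i) (xs i - xs a) (ys i - ys a) u v)].
        intro t. simpl. unfold dist2, pert. rewrite Nat.eqb_refl.
        rewrite (proj2 (Nat.eqb_neq a i) Hai). do 3 f_equal; ring.
        replace ((xs i - xs a) ^ 2 + (ys i - ys a) ^ 2) with ((xs a - xs i) ^ 2 + (ys a - ys i) ^ 2) by ring. auto.
      * unfold Gf, dist2.
        replace ((xs i - xs a) ^ 2 + (ys i - ys a) ^ 2) with ((xs a - xs i) ^ 2 + (ys a - ys i) ^ 2) by ring.
        toR. rewrite Rplus_0_l. field. apply Rgt_not_eq, sqrt_lt_R0; auto.
    + eapply is_derive_eq.
      * eapply is_derive_ext; [|exact (@is_derive_const R_AbsRing R_NormedModule (gamma * m a * m b / dist2 xs ys a b) 0)].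
        intro t. simpl. unfold dist2, pert.
        rewrite (proj2 (Nat.eqb_neq a i) Hai), (proj2 (Nat.eqb_neq b i) Hbi). auto.
      * simpl. unfold zero; simpl. lra.
Qed.

Lemma gterm_deriv m xs ys i u v a :
  is_derive (fun s => m a * (pert xs i u s a ^ 2 + pert ys i v s a ^ 2)) 0
    (if Nat.eqb a i then 2 * m i * (u * xs i + v * ys i) else 0).
Proof.
  unfold pert. destruct (Nat.eqb_spec a i).
  - subst. eapply is_derive_eq. auto_derive. auto. reflexivity. toR. fixsq. ring.
  - exact (@is_derive_const R_AbsRing R_NormedModule _ 0).
Qed.

Lemma sum_Dterm N m gamma xs ys i u v : (i < N)%nat ->
  fsum N (fun a => fsum N (fun b => Dterm m gamma xs ys i u v a b)) =
  u * Fx N m gamma xs ys i + v * Fy N m gamma xs ys i.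
Proof.
  intros Hi. set (G := Gf m gamma xs ys i u v).
  transitivity (fsum N (fun a => fsum N (fun b => if Nat.ltb a b then (if Nat.eqb a i then G b else 0) else 0)) +
                fsum N (fun a => fsum N (fun b => if Nat.ltb a b then (if Nat.eqb b i then G a else 0) else 0))).
  { rewrite <- fsum_plus. apply fsum_ext; intros a Ha. rewrite <- fsum_plus. apply fsum_ext; intros b Hb.
    unfold Dterm. fold G. destruct (Nat.ltb a b); lra. }
  rewrite (fsum_ext N _ (fun a => if Nat.eqb a i then fsum N (fun b => if Nat.ltb i b then G b else 0) else 0)).
  2: { intros a Ha. destruct (Nat.eqb_spec a i).
       - subst. apply fsum_ext; intros b Hb. reflexivity.
       - transitivity (fsum N (fun _ => 0)); [apply fsum_ext; intros b Hb; destruct (Nat.ltb a b); auto | apply fsum_zero]. }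
  rewrite fsum_single by auto.
  rewrite (fsum_ext N (fun a => fsum N _) (fun a => if Nat.ltb a i then G a else 0)).
  2: { intros a Ha. rewrite <- (fsum_single N i (if Nat.ltb a i then G a else 0)) by auto.
       apply fsum_ext; intros b Hb. destruct (Nat.eqb_spec b i); [subst|].
       - destruct (Nat.ltb a i); auto.
       - destruct (Nat.ltb a b); auto. }
  unfold Fx, Fy. rewrite <- !fsum_scal, <- !fsum_plus. apply fsum_ext; intros j Hj.
  unfold G, Gf.
  destruct (Nat.eqb_spec j i); [subst|].
  - rewrite Nat.ltb_irrefl. lra.
  - destruct (Nat.ltb_spec i j), (Nat.ltb_spec j i); try lia; unfold Rdiv; ring.
Qed.

Lemma sq_small s e : 0 < e -> Rabs s < sqrt e -> s^2 < e.
Proof.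
  intros He Hs.
  assert (H : Rsqr s < Rsqr (sqrt e)).
  { apply Rsqr_lt_abs_1. rewrite (Rabs_pos_eq (sqrt e)); auto. apply sqrt_pos. }
  rewrite Rsqr_sqrt in H by lra. unfold Rsqr in H. simpl. lra.
Qed.

Lemma pert_config N xs ys i u v s e : in_config N xs ys -> (i < N)%nat -> u^2 + v^2 = 1 ->
  0 < e -> (forall b, (b < N)%nat -> b <> i -> e <= (xs b - xs i)^2 + (ys b - ys i)^2) ->
  Rabs s < sqrt e -> in_config N (pert xs i u s) (pert ys i v s).
Proof.
  intros Hc Hi Huv He Hle Hs j k Hj Hk Hjk Heq.
  pose proof (sq_small s e He Hs) as Hs2.
  injection Heq as E1 E2. unfold pert in E1, E2.
  destruct (Nat.eqb_spec j i), (Nat.eqb_spec k i).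
  - lia.
  - subst j. pose proof (Hle k Hk n).
    assert ((xs k - xs i)^2 + (ys k - ys i)^2 = s^2 * (u^2+v^2)) by (rewrite <- E1, <- E2; ring).
    rewrite Huv in H0. lra.
  - subst k. pose proof (Hle j Hj n).
    assert ((xs j - xs i)^2 + (ys j - ys i)^2 = s^2 * (u^2+v^2)) by (rewrite E1, E2; ring).
    rewrite Huv in H0. lra.
  - apply (Hc j k Hj Hk Hjk). rewrite E1, E2. auto.
Qed.

Lemma EL N m gamma lambda xs ys i u v : (i < N)%nat -> u^2 + v^2 = 1 ->
  is_minimizer N m gamma lambda xs ys ->
  u * Fx N m gamma xs ys i + v * Fy N m gamma xs ys i + lambda * (2 * m i * (u * xs i + v * ys i)) = 0.
Proof.
  intros Hi Huv [Hc Hmin].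
  destruct (min_delta N (fun b => b <> i) (fun b => (xs b - xs i)^2 + (ys b - ys i)^2)) as [e [He Hle]].
  { intros b Hb Hbi. apply (config_pos N); auto. }
  set (h := fun s => fpot N m gamma (pert xs i u s) (pert ys i v s) + lambda * gmom N m (pert xs i u s) (pert ys i v s)).
  apply (local_min_deriv h _ (sqrt e)).
  - apply sqrt_lt_R0; auto.
  - unfold h. eapply is_derive_eq.
    + apply (is_derive_plus (fun s => fpot N m gamma (pert xs i u s) (pert ys i v s)) (fun s => lambda * gmom N m (pert xs i u s) (pert ys i v s))).
      * unfold fpot.
        apply (is_derive_fsum N (fun a s => fsum N (fun b => if Nat.ltb a b then gamma * m a * m b / dist2 (pert xs i u s) (pert ys i v s) a b else 0)) (fun a => fsum N (fun b => Dterm m gamma xs ys i u v a b))).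
        intros a Ha.
        apply (is_derive_fsum N (fun b s => if Nat.ltb a b then gamma * m a * m b / dist2 (pert xs i u s) (pert ys i v s) a b else 0)).
        intros b Hb. apply (term_deriv N); auto.
      * apply is_derive_scal. unfold gmom.
        apply (is_derive_fsum N (fun a s => m a * (pert xs i u s a ^ 2 + pert ys i v s a ^ 2))).
        intros a Ha. apply gterm_deriv.
    + toR. unfold plus; simpl. rewrite sum_Dterm by auto. rewrite fsum_single by auto. ring.
  - intros s Hs. unfold h.
    assert (E1 : pert xs i u 0 = xs). { apply functional_extensionality; intro j; unfold pert; destruct (Nat.eqb j i); ring. }
    assert (E2 : pert ys i v 0 = ys). { apply functional_extensionality; intro j; unfold pert; destruct (Nat.eqb j i); ring. }
    rewrite E1, E2. apply Hmin. apply (pert_config N xs ys i u v s e); auto.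
Qed.

Lemma dist2_rot xs ys c s i j : c^2 + s^2 = 1 ->
  dist2 (fun k => c * xs k - s * ys k) (fun k => s * xs k + c * ys k) i j = dist2 xs ys i j.
Proof.
  intros H. unfold dist2. f_equal.
  replace ((c * xs j - s * ys j - (c * xs i - s * ys i)) ^ 2 + (s * xs j + c * ys j - (s * xs i + c * ys i)) ^ 2)
    with ((c^2+s^2) * ((xs j - xs i) ^ 2 + (ys j - ys i) ^ 2)) by ring.
  rewrite H; ring.
Qed.

Lemma Fx_rot N m gamma xs ys c s i : c^2 + s^2 = 1 ->
  Fx N m gamma (fun k => c * xs k - s * ys k) (fun k => s * xs k + c * ys k) i =
  c * Fx N m gamma xs ys i - s * Fy N m gamma xs ys i.
Proof.
  intros H. assert (E: forall a b, c*a - s*b = c*a + (-s)*b) by (intros; ring).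
  rewrite E. unfold Fx, Fy.
  rewrite <- !fsum_scal, <- fsum_plus.
  apply fsum_ext. intros j Hj. rewrite dist2_rot by auto.
  destruct (Nat.eqb j i); unfold Rdiv; ring.
Qed.

Lemma Fy_rot N m gamma xs ys c s i : c^2 + s^2 = 1 ->
  Fy N m gamma (fun k => c * xs k - s * ys k) (fun k => s * xs k + c * ys k) i =
  s * Fx N m gamma xs ys i + c * Fy N m gamma xs ys i.
Proof.
  intros H. unfold Fx, Fy.
  rewrite <- !fsum_scal, <- fsum_plus.
  apply fsum_ext. intros j Hj. rewrite dist2_rot by auto.
  destruct (Nat.eqb j i); unfold Rdiv; ring.
Qed.

Lemma Fx_ext N m gamma xs ys xs' ys' i : (i < N)%nat ->
  (forall j, (j < N)%nat -> xs j = xs' j /\ ys j = ys' j) ->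
  Fx N m gamma xs ys i = Fx N m gamma xs' ys' i /\ Fy N m gamma xs ys i = Fy N m gamma xs' ys' i.
Proof.
  intros Hi H. destruct (H i Hi) as [A B]. unfold Fx, Fy, dist2. split; apply fsum_ext; intros j Hj;
  destruct (H j Hj) as [C D]; rewrite A, B, C, D; auto.
Qed.

Theorem theorem3p1 (N : nat) (m : nat -> R) (gamma lambda : R)
  (xl yl : nat -> R) (phi : nat -> R) :
  (2 <= N)%nat ->
  (forall i, (i < N)%nat -> 0 < m i) ->
  0 < gamma ->
  0 < lambda ->
  is_minimizer N m gamma lambda xl yl ->
  (* polar form r_{i lambda} = |r_{i lambda}| (cos phi_i, sin phi_i) *)
  (forall i, (i < N)%nat ->
     xl i = sqrt (xl i ^ 2 + yl i ^ 2) * cos (phi i) /\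
     yl i = sqrt (xl i ^ 2 + yl i ^ 2) * sin (phi i)) ->
  let omega := sqrt (2 * lambda) in
  let X := fun i t => sqrt (xl i ^ 2 + yl i ^ 2) * cos (phi i + omega * t) in
  let Y := fun i t => sqrt (xl i ^ 2 + yl i ^ 2) * sin (phi i + omega * t) in
  (* the trajectory stays in the configuration space *)
  (forall t, 0 <= t -> in_config N (fun j => X j t) (fun j => Y j t)) /\
  (forall i, (i < N)%nat ->
     (* differentiability of the positions *)
     (forall t, ex_derive (X i) t /\ ex_derive (Y i) t) /\
     (* equations of motion m_i r_i'' = F_i(r) for t >= 0 *)
     (forall t, 0 <= t ->
        exists ax ay,
          is_derive (Derive (X i)) t ax /\ is_derive (Derive (Y i)) t ay /\
          m i * ax = Fx N m gamma (fun j => X j t) (fun j => Y j t) i /\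
          m i * ay = Fy N m gamma (fun j => X j t) (fun j => Y j t) i) /\
     (* initial conditions *)
     X i 0 = xl i /\ Y i 0 = yl i /\
     Derive (X i) 0 = - omega * yl i /\ Derive (Y i) 0 = omega * xl i).
Proof.
  intros HN Hm Hg Hl Hmin Hpol omega X Y.
  assert (Hom : omega ^ 2 = 2 * lambda).
  { unfold omega. simpl. rewrite Rmult_1_r. apply sqrt_sqrt. lra. }
  assert (Hcs : forall t, cos (omega * t) ^ 2 + sin (omega * t) ^ 2 = 1).
  { intro t. pose proof (sin2_cos2 (omega * t)). unfold Rsqr in H. simpl. lra. }
  assert (HX : forall j t, (j < N)%nat -> X j t = cos (omega * t) * xl j - sin (omega * t) * yl j /\
                                    Y j t = sin (omega * t) * xl j + cos (omega * t) * yl j).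
  { intros j t Hj. destruct (Hpol j Hj) as [A B]. unfold X, Y. rewrite cos_plus, sin_plus.
    set (r := sqrt (xl j ^ 2 + yl j ^ 2)) in *. split.
    - transitivity (cos (omega * t) * (r * cos (phi j)) - sin (omega * t) * (r * sin (phi j))); [ring|].
      rewrite <- A, <- B. auto.
    - transitivity (sin (omega * t) * (r * cos (phi j)) + cos (omega * t) * (r * sin (phi j))); [ring|].
      rewrite <- A, <- B. auto. }
  assert (ELx : forall i, (i < N)%nat -> Fx N m gamma xl yl i = - (2 * lambda) * m i * xl i).
  { intros i Hi. pose proof (EL N m gamma lambda xl yl i 1 0 Hi ltac:(ring) Hmin). lra. }
  assert (ELy : forall i, (i < N)%nat -> Fy N m gamma xl yl i = - (2 * lambda) * m i * yl i).
  { intros i Hi. pose proof (EL N m gamma lambda xl yl i 0 1 Hi ltac:(ring) Hmin). lra. }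
  assert (DX : forall i t, is_derive (X i) t (- sqrt (xl i ^ 2 + yl i ^ 2) * omega * sin (phi i + omega * t))).
  { intros i t. unfold X. eapply is_derive_eq. auto_derive. auto. reflexivity. toR. fixsq. ring. }
  assert (DY : forall i t, is_derive (Y i) t (sqrt (xl i ^ 2 + yl i ^ 2) * omega * cos (phi i + omega * t))).
  { intros i t. unfold Y. eapply is_derive_eq. auto_derive. auto. reflexivity. toR. fixsq. ring. }
  split.
  - intros t _ j k Hj Hk Hjk Heq. injection Heq as E1 E2.
    destruct (HX j t Hj) as [A B]. destruct (HX k t Hk) as [C D].
    destruct Hmin as [Hc _]. apply (Hc j k Hj Hk Hjk).
    pose proof (Hcs t). rewrite A, C in E1. rewrite B, D in E2.
    set (c := cos (omega * t)) in *. set (s := sin (omega * t)) in *.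
    assert (G1 : (c^2+s^2)*(xl j - xl k) = c*((c * xl j - s * yl j) - (c * xl k - s * yl k)) + s*((s * xl j + c * yl j) - (s * xl k + c * yl k))) by ring.
    assert (G2 : (c^2+s^2)*(yl j - yl k) = -s*((c * xl j - s * yl j) - (c * xl k - s * yl k)) + c*((s * xl j + c * yl j) - (s * xl k + c * yl k))) by ring.
    rewrite H, E1, E2 in *. 
    assert (xl j = xl k) by lra. assert (yl j = yl k) by lra.
    rewrite H0, H1; auto.
  - intros i Hi. split; [|split].
    + intros t; split; eexists; eauto.
    + intros t _.
      exists (- sqrt (xl i ^ 2 + yl i ^ 2) * omega ^ 2 * cos (phi i + omega * t)).
      exists (- sqrt (xl i ^ 2 + yl i ^ 2) * omega ^ 2 * sin (phi i + omega * t)).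
      destruct (Fx_ext N m gamma (fun j => X j t) (fun j => Y j t)
        (fun j => cos (omega * t) * xl j - sin (omega * t) * yl j)
        (fun j => sin (omega * t) * xl j + cos (omega * t) * yl j) i Hi) as [F1 F2].
      { intros j Hj; apply HX; auto. }
      rewrite F1, F2, Fx_rot, Fy_rot, ELx, ELy by auto.
      destruct (HX i t Hi) as [A B].
      unfold X in A; unfold Y in B.
      split; [|split; [|split]].
      * eapply is_derive_ext. { intro s. symmetry. apply is_derive_unique, DX. }
        eapply is_derive_eq. auto_derive. auto. reflexivity. toR. fixsq. ring.
      * eapply is_derive_ext. { intro s. symmetry. apply is_derive_unique, DY. }
        eapply is_derive_eq. auto_derive. auto. reflexivity. toR. fixsq. ring.
      * rewrite Hom. transitivity (-(2*lambda) * m i * (cos (omega*t) * xl i - sin (omega*t) * yl i)); [rewrite <- A; ring | ring].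
      * rewrite Hom. transitivity (-(2*lambda) * m i * (sin (omega*t) * xl i + cos (omega*t) * yl i)); [rewrite <- B; ring | ring].
    + destruct (Hpol i Hi) as [A B].
      rewrite (is_derive_unique _ _ _ (DX i 0)), (is_derive_unique _ _ _ (DY i 0)).
      unfold X, Y. rewrite Rmult_0_r, Rplus_0_r.
      split; [|split; [|split]]; try (symmetry; auto; fail).
      * rewrite B at 2. ring.
      * rewrite A at 2. ring.
Qed.
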